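(* Let $l,m,n$ be positive integers with $l\le\min\{m,n\}$, and let $x,y,z$ be complex numbers with $x+y+z=1$. Then $$(-1)^m\sum_{k=0}^m\binom mk\binom{n+k}{l-1}B_{n-l+k+1}(x)E_{m-k}(z)+(-1)^{n-l}\sum_{k=0}^n\binom nk\binom{m+k}{l-1}B_{m-l+k+1}(y)E_{n-k}(z)=-\frac l2\sum_{k=0}^l(-1)^k\binom mk\binom n{l-k}E_{n-l+k}(x)E_{m-k}(y),$$ $$\sum_{k=0}^{l}(-1)^k\binom mk\binom n{l-k}B_{m-k}(x)E_{n-l+k}(z)-(-1)^m\sum_{k=0}^m\binom mk\binom{n+k}{l}B_{m-k}(y)E_{n-l+k}(z)=(-1)^{n-l-1}\frac m2\sum^n_{k=\delta_{l,m}}\binom nk\binom{m+k-1}{l}E_{n-k}(y)E_{m-l-1+k}(x),$$ and $$\frac{(-1)^m}m\sum_{k=0}^m\binom mk\binom{n+k-1}{l-1}B_{n-l+k}(x)B_{m-k}(z)+(-1)^l\frac{(-1)^n}n\sum_{k=0}^n\binom nk\binom{m+k-1}{l-1}B_{m-l+k}(y)B_{n-k}(z)=\frac l{mn}\sum_{k=0}^l(-1)^k\binom mk\binom n{l-k}B_{n-l+k}(x)B_{m-k}(y).$$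
   Context: $\delta_{l,m}$ equals $1$ if $l=m$ and $0$ otherwise. Bernoulli numbers are defined by $B_0=1$ and $\sum_{k=0}^n\binom{n+1}kB_k=0$ for $n\ge1$; Euler numbers by $E_0=1$ and $\sum_{0\le k\le n,\,2\mid n-k}\binom nkE_k=0$ for $n\ge1$. The Bernoulli polynomials are $B_n(x)=\sum_{k=0}^n\binom nkB_kx^{n-k}$ and the Euler polynomials are $E_n(x)=\sum_{k=0}^n\binom nk\frac{E_k}{2^k}(x-\frac12)^{n-k}$. *)

(* Defs.v *)
From mathcomp Require Import all_boot all_order all_algebra.
From mathcomp Require Import reals.
From mathcomp Require Import complex.
Set Implicit Arguments. Unset Strict Implicit. Unset Printing Implicit Defensive.
Import Order.TTheory GRing.Theory Num.Theory.
Local Open Scope ring_scope.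

(* Bernoulli numbers: B_0 = 1, sum_{k=0}^n C(n+1,k) B_k = 0 for n >= 1,
   i.e. B_n = -(1/(n+1)) sum_{k<n} C(n+1,k) B_k.  bern_seq n = [B_0;...;B_n]. *)
Section Numbers.
Variable F : fieldType.

Fixpoint bern_seq (n : nat) : seq F :=
  match n with
  | 0 => [:: 1]
  | n'.+1 => let s := bern_seq n' in
      rcons s (- (\sum_(k < n'.+1) ('C(n'.+2, k))%:R * s`_k) / (n'.+2)%:R)
  end.

Definition bernoulli (n : nat) : F := (bern_seq n)`_n.

(* Euler numbers: E_0 = 1, sum_{0<=k<=n, n-k even} C(n,k) E_k = 0 for n >= 1,
   i.e. E_n = - sum_{k<n, n-k even} C(n,k) E_k. *)
Fixpoint euler_seq (n : nat) : seq F :=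
  match n with
  | 0 => [:: 1]
  | n'.+1 => let s := euler_seq n' in
      rcons s (- \sum_(k < n'.+1 | ~~ odd (n'.+1 - k)) ('C(n'.+1, k))%:R * s`_k)
  end.

Definition euler (n : nat) : F := (euler_seq n)`_n.

Definition bernoulliP (n : nat) (x : F) : F :=
  \sum_(k < n.+1) ('C(n, k))%:R * bernoulli k * x ^+ (n - k).

Definition eulerP (n : nat) (x : F) : F :=
  \sum_(k < n.+1) ('C(n, k))%:R * (euler k / 2%:R ^+ k) * (x - 2%:R^-1) ^+ (n - k).

End Numbers.

(* Main.v *)
Require Import Defs.
From mathcomp Require Import all_boot all_order all_algebra.
From mathcomp Require Import reals complex.
From mathcomp Require Import ring zify.
Set Implicit Arguments. Unset Strict Implicit. Unset Printing Implicit Defensive.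
Import Order.TTheory GRing.Theory Num.Theory.
Local Open Scope ring_scope.
Section Gen.
Variable F : numFieldType.
Implicit Types (c d : nat -> F) (p q r : {poly F}) (x y z a b h s t : F).

Lemma poly_eq_ev p q : (forall t, p.[t] = q.[t]) -> p = q.
Proof.
move=> H; apply/eqP; rewrite -subr_eq0; apply/eqP.
apply: (@roots_geq_poly_eq0 _ _ [seq i%:R | i <- iota 0 (size (p - q))]).
- by apply/allP => u /mapP [i _ ->]; rewrite /root hornerD hornerN H subrr.
- by rewrite map_inj_uniq ?iota_uniq // => i j /eqP; rewrite eqr_nat => /eqP.
- by rewrite size_map size_iota.
Qed.

Definition lf c p : F := \sum_(i < size p) p`_i * c i.

Lemma lfE c p N : (size p <= N)%N -> lf c p = \sum_(i < N) p`_i * c i.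
Proof.
move=> le; rewrite /lf (big_ord_widen N (fun i => p`_i * c i) le).
rewrite [RHS](bigID (fun i : 'I_N => (i < size p)%N)) /= [X in _ = _ + X]big1 ?addr0 //.
by move=> i; rewrite -leqNgt => H; rewrite nth_default // mul0r.
Qed.

Lemma lfD c p q : lf c (p + q) = lf c p + lf c q.
Proof.
set N := maxn (size p) (size q).
rewrite (lfE c (size_polyD p q)) (@lfE c p N) ?leq_maxl // (@lfE c q N) ?leq_maxr //.
by rewrite -big_split; apply: eq_bigr => i _; rewrite coefD mulrDl.
Qed.

Lemma lfZ c k p : lf c (k *: p) = k * lf c p.
Proof.
rewrite (lfE c (size_scale_leq k p)) /lf mulr_sumr.
by apply: eq_bigr => i _; rewrite coefZ mulrA.
Qed.

Lemma lf0 c : lf c 0 = 0.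
Proof. by rewrite /lf size_poly0 big_ord0. Qed.

Lemma lfN c p : lf c (- p) = - lf c p.
Proof. by rewrite -scaleN1r lfZ mulN1r. Qed.

Lemma lfB c p q : lf c (p - q) = lf c p - lf c q.
Proof. by rewrite lfD lfN. Qed.

Lemma lfMn c p n : lf c (p *+ n) = lf c p *+ n.
Proof. by rewrite -scaler_nat lfZ mulr_natl. Qed.

Lemma lf_sum c I (r : seq I) (P : pred I) (G : I -> {poly F}) :
  lf c (\sum_(i <- r | P i) G i) = \sum_(i <- r | P i) lf c (G i).
Proof. exact: (big_morph (lf c) (lfD c) (lf0 c)). Qed.

Lemma lf_delta j p : lf (fun i => (i == j)%:R) p = p`_j.
Proof.
have le : (size p <= size p + j.+1)%N by rewrite leq_addr.
have lt : (j < size p + j.+1)%N by rewrite addnS ltnS leq_addl.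
rewrite (lfE _ le) (bigD1 (Ordinal lt)) //= eqxx mulr1 big1 ?addr0 //.
move=> i; rewrite -val_eqE /= => /negbTE ->; by rewrite mulr0.
Qed.

Lemma lfXn c k : lf c 'X^k = c k.
Proof.

rewrite (lfE c (eq_leq (size_polyXn F k))) (bigD1 ord_max) //= coefXn eqxx mul1r big1 ?addr0 //.
move=> i; rewrite -val_eqE /= coefXn => /negbTE ->; by rewrite mul0r.
Qed.

Lemma lfC c k : lf c k%:P = k * c 0%N.
Proof.
have -> : k%:P = k *: ('X^0 : {poly F}) by rewrite expr0 alg_polyC.
by rewrite lfZ lfXn.
Qed.

Lemma lf_comp c p q : lf c (p \Po q) = \sum_(i < size p) p`_i * lf c (q ^+ i).
Proof. by rewrite comp_polyE lf_sum; apply: eq_bigr => i _; rewrite lfZ. Qed.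

Lemma lf_def c p : lf c p = \sum_(i < size p) p`_i * c i.
Proof. by []. Qed.

Definition A c n x := \sum_(k < n.+1) 'C(n, k)%:R * c k * x ^+ (n - k).

Lemma XaddC_exp x n : ('X + x%:P) ^+ n = \sum_(k < n.+1) ('C(n, k)%:R * x ^+ (n - k)) *: 'X^k.
Proof.
rewrite addrC exprDn; apply: eq_bigr => k _.
by rewrite -rmorphXn mul_polyC -scaler_nat scalerA mulrC.
Qed.

Lemma lf_XaddC c n x : lf c (('X + x%:P) ^+ n) = A c n x.
Proof.
rewrite XaddC_exp lf_sum; apply: eq_bigr => k _; rewrite lfZ lfXn; ring.
Qed.

Lemma A_add c n x h :
  A c n (x + h) = \sum_(k < n.+1) 'C(n, k)%:R * h ^+ k * A c (n - k) x.
Proof.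
rewrite -lf_XaddC polyCD addrA exprDn lf_sum; apply: eq_bigr => k _.
rewrite lfMn -rmorphXn mulrC mul_polyC lfZ lf_XaddC mulr_natl; ring.
Qed.

Lemma A_rev c n x : A c n x = \sum_(k < n.+1) 'C(n, k)%:R * x ^+ k * c (n - k)%N.
Proof.
rewrite /A (reindex_inj rev_ord_inj) /=; apply: eq_bigr => k _.
have le : (k <= n)%N := ltn_ord k.
rewrite subKn // bin_sub //; ring.
Qed.

Definition Apol c n : {poly F} := \sum_(k < n.+1) ('C(n, k)%:R * c k) *: 'X^(n - k).

Lemma hornerA c n t : (Apol c n).[t] = A c n t.
Proof. by rewrite /Apol horner_sum; apply: eq_bigr => k _; rewrite hornerZ hornerXn. Qed.

Lemma Apol_comp c n x s : Apol c n \Po (x%:P + s *: 'X) =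
  \sum_(k < n.+1) ('C(n, k)%:R * s ^+ k * A c (n - k) x) *: 'X^k.
Proof.
apply: poly_eq_ev => t; rewrite horner_comp hornerA horner_sum !hornerE A_add.
apply: eq_bigr => k _; rewrite hornerZ hornerXn exprMn; ring.
Qed.

Lemma coef_Apol_comp c n x s j : (Apol c n \Po (x%:P + s *: 'X))`_j =
  'C(n, j)%:R * s ^+ j * A c (n - j) x.
Proof.
rewrite Apol_comp coef_sum; case: (ltnP j n.+1) => [lt|ge].
  rewrite (bigD1 (Ordinal lt)) //= coefZ coefXn eqxx mulr1 big1 ?addr0 //.
  move=> k; rewrite -val_eqE /= coefZ coefXn eq_sym => /negbTE ->; by rewrite mulr0.
rewrite big1; first by rewrite bin_small // !mul0r.
move=> k _; rewrite coefZ coefXn.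
have -> : (j == k) = false by apply/negbTE; rewrite neq_ltn (leq_trans (ltn_ord k)) ?orbT.
by rewrite mulr0.
Qed.

Lemma coef_Apol c n j : (Apol c n)`_j = 'C(n, j)%:R * A c (n - j) 0.
Proof.
have := coef_Apol_comp c n 0 1 j; rewrite add0r scale1r comp_polyXr => ->.
by rewrite expr1n mulr1.
Qed.

Lemma deriv_Apol c n : (Apol c n)^`() = n%:R *: Apol c n.-1.
Proof.
apply/polyP => j; rewrite coef_deriv coefZ !coef_Apol.
case: n => [|n] /=; first by rewrite bin0n !mul0r mul0rn.
rewrite subSS -mulr_natr.
have H : ('C(n.+1, j.+1)%:R * (j.+1)%:R = (n.+1)%:R * 'C(n, j)%:R :> F).
  by rewrite -!natrM mulnC mul_bin_diag.
transitivity (('C(n.+1, j.+1)%:R * (j.+1)%:R) * A c (n - j) 0); first by ring.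
by rewrite H; ring.
Qed.

End Gen.
Section Num.
Variable F : numFieldType.
Implicit Types (p q : {poly F}) (x : F).
Local Notation B := (bernoulli F).
Local Notation E := (euler F).

Lemma natr_neq0 n : ((n.+1)%:R : F) != 0.
Proof. by rewrite pnatr_eq0. Qed.

Lemma signB k N : (k <= N)%N -> (-1) ^+ (N - k) = (-1) ^+ N * (-1) ^+ k :> F.
Proof.
move=> le; rewrite -{2}(subnK le) exprD -mulrA -exprD addnn -mul2n exprM.
by rewrite sqrrN !expr1n mulr1.
Qed.

Lemma sign_sq k : (-1) ^+ k * (-1) ^+ k = 1 :> F.
Proof. by rewrite -exprD addnn -mul2n exprM sqrrN !expr1n. Qed.

Lemma coef_sumXn (f : nat -> F) N j :
  (\sum_(k < N.+1) f k *: 'X^k)`_j = if (j < N.+1)%N then f j else 0.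
Proof.
rewrite coef_sum; case: (ltnP j N.+1) => [lt|ge].
  rewrite (bigD1 (Ordinal lt)) //= coefZ coefXn eqxx mulr1 big1 ?addr0 //.
  move=> k; rewrite -val_eqE /= coefZ coefXn eq_sym => /negbTE ->; by rewrite mulr0.
apply: big1 => k _; rewrite coefZ coefXn.
have -> : (j == k) = false by apply/negbTE; rewrite neq_ltn (leq_trans (ltn_ord k)) ?orbT.
by rewrite mulr0.
Qed.

Lemma coef_XaddC x N j : (('X + x%:P) ^+ N)`_j = 'C(N, j)%:R * x ^+ (N - j).
Proof.
rewrite XaddC_exp (coef_sumXn (fun k => 'C(N, k)%:R * x ^+ (N - k))); case: ltnP => // ge.
by rewrite bin_small // mul0r.
Qed.

Lemma comp_Xsub1 N : ('X + (-1)%:P) ^+ N \Po ('X + 1) = 'X^N :> {poly F}.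
Proof.
apply: poly_eq_ev => t; rewrite horner_comp !hornerE.
by rewrite addrK.
Qed.

Lemma bern_seq_size n : size (bern_seq F n) = n.+1.
Proof. by elim: n => //= n IH; rewrite size_rcons IH. Qed.

Lemma bern_seq_nth n k : (k <= n)%N -> (bern_seq F n)`_k = B k.
Proof.
elim: n => [|n IH]; first by rewrite leqn0 => /eqP ->.
rewrite leq_eqVlt => /orP [/eqP -> //| lt].
by rewrite /= nth_rcons bern_seq_size lt IH.
Qed.

Lemma bernS n :
  B n.+1 = - (\sum_(k < n.+1) ('C(n.+2, k))%:R * B k) / (n.+2)%:R.
Proof.
rewrite {1}/bernoulli /= nth_rcons bern_seq_size ltnn eqxx.
congr (- _ / _); apply: eq_bigr => k _; rewrite bern_seq_nth //.
exact: (ltn_ord k).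
Qed.

Lemma bern0 : B 0 = 1.
Proof. by []. Qed.

Lemma bern_rec n : \sum_(k < n.+2) 'C(n.+2, k)%:R * B k = 0.
Proof.
rewrite big_ord_recr /= binSn bernS.
have := natr_neq0 n.+1; set S := \sum_(_ < _) _ => H.
by rewrite mulrCA mulfV // mulr1 subrr.
Qed.

Lemma bern_shift k : A B k 1 = B k + (k == 1%N)%:R.
Proof.
case: k => [|[|n]].
- by rewrite /A big_ord_recr big_ord0 /= add0r bern0 !mul1r addr0.
- rewrite /A !big_ord_recr big_ord0 /= add0r bern0 !expr1n !mulr1 bin0 bin1.
  by rewrite mul1r addrC.
rewrite /A big_ord_recr /= subnn expr0 mulr1 binn mul1r addr0.
have -> : \sum_(i < n.+2) 'C(n.+2, i)%:R * B i * 1 ^+ (n.+2 - i) =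
          \sum_(i < n.+2) 'C(n.+2, i)%:R * B i.
  by apply: eq_bigr => i _; rewrite expr1n mulr1.
by rewrite bern_rec add0r.
Qed.

Lemma lfB_shift p : lf B (p \Po ('X + 1)) = lf B p + p`_1.
Proof.
rewrite lf_comp -lf_delta !lf_def -big_split /=; apply: eq_bigr => i _.
have -> : ('X + 1 : {poly F}) = 'X + 1%:P by rewrite polyC1.
by rewrite lf_XaddC bern_shift mulrDr.
Qed.

Lemma sign_cancel N k : (k <= N)%N -> (-1) ^+ N * (-1) ^+ (N - k) = (-1) ^+ k :> F.
Proof. by move=> le; rewrite signB // mulrA sign_sq mul1r. Qed.

Lemma bern_alt N :
  \sum_(i < N.+1) 'C(N, i)%:R * (-1) ^+ i * B i = (-1) ^+ N * B N + N%:R.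
Proof.
have := lfB_shift (('X + (-1)%:P) ^+ N).
rewrite comp_Xsub1 lfXn lf_XaddC coef_XaddC bin1 /A => H.
case: N H => [|N] H.
  by rewrite big_ord_recr big_ord0 /= add0r expr0 !mul1r addr0.
rewrite {1}H mulrDr mulr_sumr subn1 /= -addrA.
have E1 : (-1) ^+ N.+1 * ((N.+1)%:R * (-1) ^+ N) + (N.+1)%:R = 0 :> F.
  rewrite exprS; have XX := sign_sq N; set X := (-1) ^+ N in XX *.
  transitivity ((N.+1)%:R * (1 - X * X)); first by ring.
  by rewrite XX subrr mulr0.
rewrite E1 addr0; apply: eq_bigr => k _.
have le : (k <= N.+1)%N := ltn_ord k.
rewrite mulrCA sign_cancel //; ring.
Qed.

Lemma bern_uniq (c : nat -> F) : c 0%N = 1 ->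
  (forall n, \sum_(k < n.+2) 'C(n.+2, k)%:R * c k = 0) -> forall k, c k = B k.
Proof.
move=> c0 Hc k; elim: k {-2}k (leqnn k) => [|n IH] k.
  by rewrite leqn0 => /eqP ->.
rewrite leq_eqVlt => /orP [/eqP ->|]; last by rewrite ltnS; apply: IH.
have h1 := Hc n; have h2 := bern_rec n.
rewrite big_ord_recr /= in h1; rewrite big_ord_recr /= in h2.
have eqS : \sum_(i < n.+1) 'C(n.+2, i)%:R * c i = \sum_(i < n.+1) 'C(n.+2, i)%:R * B i.
  by apply: eq_bigr => i _; rewrite IH // -ltnS.
apply: (@mulfI _ ('C(n.+2, n.+1)%:R)); first by rewrite binSn natr_neq0.
apply: (@addrI _ (\sum_(i < n.+1) 'C(n.+2, i)%:R * B i)).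
by rewrite -{1}eqS h1 h2.
Qed.

Lemma bern_refl k : (-1) ^+ k * B k = B k + (k == 1%N)%:R.
Proof.
suff H : forall k, (-1) ^+ k * B k - (k == 1%N)%:R = B k.
  by rewrite -{2}(H k) subrK.
apply: bern_uniq; first by rewrite expr0 mul1r bern0 subr0.
move=> n.
have S1 : \sum_(k < n.+2) 'C(n.+2, k)%:R * (-1) ^+ k * B k = (n.+2)%:R.
  have := bern_alt n.+2; rewrite big_ord_recr /= binn mul1r addrC.
  by move/addrI.
have S2 : \sum_(k < n.+2) 'C(n.+2, k)%:R * ((k : nat) == 1%N)%:R = (n.+2)%:R :> F.
  rewrite big_ord_recl big_ord_recl /= big1 ?addr0; last by move=> i _; rewrite mulr0.
  by rewrite mulr0 add0r bin1 mulr1.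
have -> : \sum_(k < n.+2) 'C(n.+2, k)%:R * ((-1) ^+ k * B k - ((k : nat) == 1%N)%:R)
   = \sum_(k < n.+2) 'C(n.+2, k)%:R * (-1) ^+ k * B k - \sum_(k < n.+2) 'C(n.+2, k)%:R * ((k : nat) == 1%N)%:R.
  by rewrite -sumrB; apply: eq_bigr => i _; ring.
by rewrite S1 S2 subrr.
Qed.

Lemma negX_exp i : (- 'X) ^+ i = ((-1) ^+ i) *: ('X^i : {poly F}).
Proof. by apply: poly_eq_ev => t; rewrite hornerZ !hornerE; exact: exprNn. Qed.

Lemma lfB_refl p : lf B (p \Po (- 'X)) = lf B p + p`_1.
Proof.
rewrite lf_comp -lf_delta !lf_def -big_split /=; apply: eq_bigr => i _.
by rewrite negX_exp lfZ lfXn bern_refl mulrDr.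
Qed.

Lemma XaddC1 : ('X + 1 : {poly F}) = 'X + 1%:P.
Proof. by rewrite polyC1. Qed.

Lemma euler_seq_size n : size (euler_seq F n) = n.+1.
Proof. by elim: n => //= n IH; rewrite size_rcons IH. Qed.

Lemma euler_seq_nth n k : (k <= n)%N -> (euler_seq F n)`_k = E k.
Proof.
elim: n => [|n IH]; first by rewrite leqn0 => /eqP ->.
rewrite leq_eqVlt => /orP [/eqP -> //| lt].
by rewrite /= nth_rcons euler_seq_size lt IH.
Qed.

Lemma eulerS n :
  E n.+1 = - \sum_(k < n.+1 | ~~ odd (n.+1 - k)) ('C(n.+1, k))%:R * E k.
Proof.
rewrite {1}/euler /= nth_rcons euler_seq_size ltnn eqxx.
congr (- _); apply: eq_bigr => k _; rewrite euler_seq_nth //.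
exact: (ltn_ord k).
Qed.

Lemma euler0 : E 0 = 1.
Proof. by []. Qed.

Definition Eg k : F := eulerP k 0.
Definition ee k : F := E k / 2%:R ^+ k.

Lemma eulerP_e n x : eulerP n x = A ee n (x - 2%:R^-1).
Proof. by []. Qed.

Lemma eulerP_A n x : eulerP n x = A Eg n x.
Proof.
rewrite eulerP_e addrC A_add A_rev; apply: eq_bigr => k _.
by rewrite /Eg eulerP_e sub0r.
Qed.

Lemma euler_key k : \sum_(i < k.+1) 'C(k, i)%:R * E i * (1 + (-1) ^+ (k - i))
   = 2%:R * (k == 0%N)%:R.
Proof.
case: k => [|n].
  by rewrite big_ord_recr big_ord0 /= add0r euler0 subnn expr0 bin0; ring.
rewrite big_ord_recr /= subnn expr0 binn mulr0.
have -> : \sum_(i < n.+1) 'C(n.+1, i)%:R * E i * (1 + (-1) ^+ (n.+1 - i))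
   = 2%:R * \sum_(i < n.+1 | ~~ odd (n.+1 - i)) 'C(n.+1, i)%:R * E i.
  rewrite [in RHS]big_mkcond mulr_sumr; apply: eq_bigr => i _.
  rewrite -signr_odd; case: (odd _) => /=; first by rewrite expr1 subrr !mulr0.
  by rewrite expr0; ring.
rewrite eulerS; ring.
Qed.

Lemma euler_shift k : A Eg k 1 + Eg k = 2%:R * (k == 0%N)%:R.
Proof.
rewrite -eulerP_A /Eg !eulerP_e /A -big_split /=.
set h : F := 2%:R^-1.
have hh : 1 - h = h by rewrite /h; field.
have -> : \sum_(i < k.+1) ('C(k, i)%:R * ee i * (1 - h) ^+ (k - i) + 'C(k, i)%:R * ee i * (0 - h) ^+ (k - i))
  = h ^+ k * \sum_(i < k.+1) 'C(k, i)%:R * E i * (1 + (-1) ^+ (k - i)).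
  rewrite mulr_sumr; apply: eq_bigr => i _.
  have le : (i <= k)%N := ltn_ord i.
  have hk : h ^+ k = h ^+ i * h ^+ (k - i) by rewrite -exprD subnKC.
  rewrite hh sub0r [(- h) ^+ _]exprNn /ee -exprVn -/h hk; ring.
rewrite euler_key; case: k => [|k]; first by rewrite expr0 mul1r.
by rewrite /= !mulr0.
Qed.

Lemma lfE_shift p : lf Eg (p \Po ('X + 1)) + lf Eg p = 2%:R * p`_0.
Proof.
rewrite lf_comp -lf_delta !lf_def mulr_sumr -big_split /=; apply: eq_bigr => i _.
rewrite XaddC1 lf_XaddC -mulrDr euler_shift; ring.
Qed.

Lemma euler_alt N :
  \sum_(i < N.+1) 'C(N, i)%:R * (-1) ^+ i * Eg i = 2%:R - (-1) ^+ N * Eg N.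
Proof.
have := lfE_shift (('X + (-1)%:P) ^+ N).
rewrite comp_Xsub1 lfXn lf_XaddC coef_XaddC bin0 subn0 /A => H.
transitivity ((-1) ^+ N * (\sum_(k < N.+1) 'C(N, k)%:R * Eg k * (-1) ^+ (N - k))).
  rewrite mulr_sumr; apply: eq_bigr => k _; have le : (k <= N)%N := ltn_ord k.
  by rewrite mulrCA sign_cancel //; ring.
have H' : \sum_(k < N.+1) 'C(N, k)%:R * Eg k * (-1) ^+ (N - k) = 2%:R * (1 * (-1) ^+ N) - Eg N.
  by rewrite -H addrC addKr.
rewrite H'; have XX := sign_sq N; set X := (-1) ^+ N in XX *.
transitivity (2%:R * (X * X) - X * Eg N); first by ring.
by rewrite XX mulr1.
Qed.

Lemma dbl_inj (u v : F) : u + u = v + v -> u = v.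
Proof.
move=> H; apply: (@mulfI _ 2%:R); first exact: (natr_neq0 1).
by rewrite !mulr_natl !mulr2n.
Qed.

Lemma euler_uniq (c : nat -> F) :
  (forall k, \sum_(i < k.+1) 'C(k, i)%:R * c i + c k = 2%:R * (k == 0%N)%:R) ->
  forall k, c k = Eg k.
Proof.
move=> Hc; elim/ltn_ind => k IH.
have h1 := Hc k.
have h2 : \sum_(i < k.+1) 'C(k, i)%:R * Eg i + Eg k = 2%:R * (k == 0%N)%:R.
  by rewrite -euler_shift /A; congr (_ + _); apply: eq_bigr => i _; rewrite expr1n mulr1.
rewrite big_ord_recr /= binn mul1r in h1; rewrite big_ord_recr /= binn mul1r in h2.
have eqS : \sum_(i < k) 'C(k, i)%:R * c i = \sum_(i < k) 'C(k, i)%:R * Eg i.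
  by apply: eq_bigr => i _; rewrite IH.
apply: dbl_inj; apply: (@addrI _ (\sum_(i < k) 'C(k, i)%:R * Eg i)).
by rewrite !addrA -{1}eqS h1 h2.
Qed.

Lemma euler_refl k : (-1) ^+ k * Eg k = - Eg k + 2%:R * (k == 0%N)%:R.
Proof.
suff H : forall k, - ((-1) ^+ k * Eg k) + 2%:R * (k == 0%N)%:R = Eg k.
  by rewrite -[in RHS](H k); ring.
clear k; apply: euler_uniq => k.
have S2 : \sum_(i < k.+1) 'C(k, i)%:R * (2%:R * ((i : nat) == 0%N)%:R) = 2%:R :> F.
  rewrite big_ord_recl /= big1 ?addr0; last by move=> i _; rewrite mulr0 mulr0.
  by rewrite bin0 mul1r mulr1.
have -> : \sum_(i < k.+1) 'C(k, i)%:R * (- ((-1) ^+ i * Eg i) + 2%:R * ((i : nat) == 0%N)%:R)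
  = - \sum_(i < k.+1) 'C(k, i)%:R * (-1) ^+ i * Eg i
    + \sum_(i < k.+1) 'C(k, i)%:R * (2%:R * ((i : nat) == 0%N)%:R).
  by rewrite -sumrN -big_split; apply: eq_bigr => i _ /=; ring.
rewrite S2 euler_alt; ring.
Qed.

Lemma lfE_refl p : lf Eg (p \Po (- 'X)) = - lf Eg p + 2%:R * p`_0.
Proof.
rewrite lf_comp -lf_delta !lf_def mulr_sumr -sumrN -big_split /=.
apply: eq_bigr => i _; rewrite negX_exp lfZ lfXn euler_refl; ring.
Qed.


Lemma comp_refl1 u m : ('X + (-u)%:P) ^+ m \Po ('X + 1) = ('X + (1 - u)%:P) ^+ m :> {poly F}.
Proof. by apply: poly_eq_ev => t; rewrite horner_comp !hornerE; congr (_ ^+ _); ring. Qed.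

Lemma comp_refl2 u m : ('X + (-u)%:P) ^+ m =
   (-1) ^+ m *: (('X + u%:P) ^+ m \Po (- 'X)) :> {poly F}.
Proof.
apply: poly_eq_ev => t; rewrite hornerZ horner_comp !hornerE -exprMn.
by congr (_ ^+ _); ring.
Qed.

Lemma bern_reflA m u : A B m (1 - u) = (-1) ^+ m * A B m u.
Proof.
have := lfB_shift (('X + (-u)%:P) ^+ m).
rewrite comp_refl1 !lf_XaddC coef_XaddC bin1 => ->.
rewrite -lf_XaddC comp_refl2 lfZ lfB_refl lf_XaddC coef_XaddC bin1.
case: m => [|m]; first by rewrite !mul0r !addr0.
rewrite subn1 /= [(- u) ^+ _]exprNn exprS; ring.
Qed.

Lemma euler_reflA m u : A Eg m (1 - u) = (-1) ^+ m * A Eg m u.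
Proof.
have := lfE_shift (('X + (-u)%:P) ^+ m).
rewrite comp_refl1 !lf_XaddC coef_XaddC bin0 subn0 => H.
have -> : A Eg m (1 - u) = 2%:R * (1 * (- u) ^+ m) - A Eg m (- u) by rewrite -H addrK.
rewrite -lf_XaddC comp_refl2 lfZ lfE_refl lf_XaddC coef_XaddC bin0 subn0 ![(- u) ^+ _]exprNn.
ring.
Qed.

End Num.
Section Q.
Variable F : numFieldType.
Implicit Types (c d : nat -> F) (p q : {poly F}) (x a b t : F).
Local Notation B := (bernoulli F).
Local Notation Eg := (@Eg F).
Let hE := (hornerD, hornerN, hornerX, hornerC, horner_exp, hornerM, hornerZ, hornerXn).

Lemma bern_shiftA x m : A B m (x + 1) = A B m x + m%:R * x ^+ m.-1.
Proof.
have := lfB_shift (('X + x%:P) ^+ m).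
have -> : ('X + x%:P) ^+ m \Po ('X + 1) = ('X + (x + 1)%:P) ^+ m.
  by apply: poly_eq_ev => u; rewrite horner_comp !hE; congr (_ ^+ _); ring.
by rewrite !lf_XaddC coef_XaddC bin1 subn1.
Qed.

Lemma euler_shiftA x m : A Eg m (x + 1) = 2%:R * x ^+ m - A Eg m x.
Proof.
have := lfE_shift (('X + x%:P) ^+ m).
have -> : ('X + x%:P) ^+ m \Po ('X + 1) = ('X + (x + 1)%:P) ^+ m.
  by apply: poly_eq_ev => u; rewrite horner_comp !hE; congr (_ ^+ _); ring.
rewrite !lf_XaddC coef_XaddC bin0 subn0 => H.
apply: (@addIr _ (A Eg m x)); rewrite H; ring.
Qed.

Definition Q d c n m a b := lf d (('X + a%:P) ^+ n * (Apol c m \Po (b%:P - 'X))).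
Definition P d n m a b := lf d (('X + a%:P) ^+ n * (b%:P - 'X) ^+ m).

Lemma comp_sum p (I : Type) (r : seq I) (G : I -> {poly F}) :
  (\sum_(i <- r) G i) \Po p = \sum_(i <- r) (G i \Po p).
Proof. by apply: (big_morph (fun u => u \Po p)) => [u v|]; rewrite ?comp_polyD ?comp_poly0. Qed.

Lemma subX_sc b : b%:P - 'X = b%:P + (-1) *: ('X : {poly F}).
Proof. by rewrite scaleN1r. Qed.

Lemma coef_subX c m b j : (Apol c m \Po (b%:P - 'X))`_j = 'C(m, j)%:R * (-1) ^+ j * A c (m - j) b.
Proof. by rewrite subX_sc coef_Apol_comp. Qed.

Lemma hornerQ c m b t : (Apol c m \Po (b%:P - 'X)).[t] = A c m (b - t).
Proof. by rewrite horner_comp hornerA !hE. Qed.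

Lemma Q_appn d c m b n a :
  Q d c n m (a + 1) b = \sum_(k < n.+1) 'C(n, k)%:R * Q d c (n - k) m a b.
Proof.
rewrite /Q polyCD polyC1 addrA exprDn mulr_suml lf_sum; apply: eq_bigr => k _.
by rewrite expr1n mulr1 [in LHS]mulrnAl lfMn mulr_natl.
Qed.

Lemma Apol_app1 c m : Apol c m \Po ('X + 1) = \sum_(k < m.+1) 'C(m, k)%:R *: Apol c (m - k).
Proof.
apply: poly_eq_ev => t; rewrite horner_comp hornerA !hE A_add horner_sum.
by apply: eq_bigr => k _; rewrite hornerZ hornerA expr1n mulr1.
Qed.

Lemma Q_appm d c j b n a :
  Q d c j n b (a + 1) = \sum_(k < n.+1) 'C(n, k)%:R * Q d c j (n - k) b a.
Proof.
rewrite /Q.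
have -> : Apol c n \Po ((a + 1)%:P - 'X) = (Apol c n \Po ('X + 1)) \Po (a%:P - 'X).
  rewrite -comp_polyA comp_polyD comp_polyX comp_polyC polyCD; congr (_ \Po _).
  by rewrite polyC1 addrAC.
rewrite Apol_app1 comp_sum mulr_sumr lf_sum; apply: eq_bigr => k _.
by rewrite comp_polyZ -scalerAr lfZ.
Qed.

Lemma comp_shift n c m a b :
  (('X + a%:P) ^+ n * (Apol c m \Po ((b + 1)%:P - 'X))) \Po ('X + 1)
  = ('X + (a + 1)%:P) ^+ n * (Apol c m \Po (b%:P - 'X)).
Proof.
apply: poly_eq_ev => t; rewrite horner_comp !hE !hornerQ.
congr (_ ^+ _ * A c m _); ring.
Qed.

Lemma QB_shift c n m a b :
  Q B c n m (a + 1) b = Q B c n m a (b + 1)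
    + n%:R * a ^+ n.-1 * A c m (b + 1) - m%:R * a ^+ n * A c m.-1 (b + 1).
Proof.
rewrite /Q -comp_shift lfB_shift coefM big_ord_recr big_ord_recr big_ord0 /= add0r.
rewrite !coef_XaddC !coef_subX !subn0 !subnn !bin0 !bin1 !subn1 !expr0 !expr1.
ring.
Qed.

Lemma QE_shift c n m a b :
  Q Eg c n m (a + 1) b = - Q Eg c n m a (b + 1) + 2%:R * a ^+ n * A c m (b + 1).
Proof.
have := lfE_shift (('X + a%:P) ^+ n * (Apol c m \Po ((b + 1)%:P - 'X))).
rewrite comp_shift -/(Q Eg c n m (a + 1) b) -/(Q Eg c n m a (b + 1)) -horner_coef0.
rewrite !hE hornerQ add0r subr0 => H.
apply: (@addIr _ (Q Eg c n m a (b + 1))); rewrite H; ring.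
Qed.

Lemma QEg_b d n m a b :
  Q d Eg n m a (b + 1) = 2%:R * P d n m a b - Q d Eg n m a b.
Proof.
rewrite /Q /P.
have -> : Apol Eg m \Po ((b + 1)%:P - 'X) = 2%:R *: (b%:P - 'X) ^+ m - (Apol Eg m \Po (b%:P - 'X)).
  apply: poly_eq_ev => t; rewrite hornerQ !hE hornerQ.
  rewrite -euler_shiftA; congr (A _ _ _); ring.
by rewrite mulrBr lfB -scalerAr lfZ.
Qed.

Lemma QB_b d n m a b :
  Q d B n m a (b + 1) = Q d B n m a b + m%:R * P d n m.-1 a b.
Proof.
rewrite /Q /P.
have -> : Apol B m \Po ((b + 1)%:P - 'X) = (Apol B m \Po (b%:P - 'X)) + m%:R *: (b%:P - 'X) ^+ m.-1.
  apply: poly_eq_ev => t; rewrite hornerQ !hE hornerQ.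
  have -> : b + 1 - t = (b - t) + 1 by ring.
  by rewrite bern_shiftA.
by rewrite mulrDr lfD -scalerAr lfZ.
Qed.

Lemma coef_CsubX b m j : ((b%:P - 'X) ^+ m)`_j = 'C(m, j)%:R * (-1) ^+ j * b ^+ (m - j).
Proof.
have -> : (b%:P - 'X) ^+ m = \sum_(k < m.+1) ('C(m, k)%:R * (-1) ^+ k * b ^+ (m - k)) *: ('X^k : {poly F}).
  apply: poly_eq_ev => t; rewrite !hE horner_sum exprDn.
  apply: eq_bigr => k _; rewrite !hE [(- t) ^+ _]exprNn; ring.
rewrite (coef_sumXn (fun k => 'C(m, k)%:R * (-1) ^+ k * b ^+ (m - k))).
case: ltnP => // ge; by rewrite bin_small // !mul0r.
Qed.

Lemma comp_reflP n m a b :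
  (('X + a%:P) ^+ n * (b%:P - 'X) ^+ m) \Po (- 'X) = ('X + b%:P) ^+ m * (a%:P - 'X) ^+ n.
Proof.
apply: poly_eq_ev => t; rewrite horner_comp !hE mulrC; congr (_ ^+ _ * _ ^+ _); ring.
Qed.

Lemma PB_refl n m a b :
  P B m n b a = P B n m a b + n%:R * a ^+ n.-1 * b ^+ m - m%:R * a ^+ n * b ^+ m.-1.
Proof.
rewrite /P -comp_reflP lfB_refl coefM big_ord_recr big_ord_recr big_ord0 /= add0r.
rewrite !coef_XaddC !coef_CsubX !subn0 !subnn !bin0 !bin1 !subn1 !expr0 !expr1.
ring.
Qed.

Lemma PE_refl n m a b :
  P Eg m n b a = - P Eg n m a b + 2%:R * a ^+ n * b ^+ m.
Proof.
rewrite /P -comp_reflP lfE_refl -horner_coef0 !hE add0r subr0 mulrA //.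
Qed.

End Q.
Section K.
Variable F : numFieldType.
Implicit Types (c d : nat -> F) (a b x : F).
Local Notation B := (bernoulli F).
Local Notation Eg := (@Eg F).

Definition appell (f : nat -> F -> F) :=
  forall n a, f n (a + 1) = \sum_(k < n.+1) 'C(n, k)%:R * f (n - k)%N a.

Lemma appellB f g : appell f -> appell g -> appell (fun n a => f n a - g n a).
Proof.
move=> hf hg n a /=; rewrite hf hg -sumrB; apply: eq_bigr => k _; ring.
Qed.

Lemma appellD f g : appell f -> appell g -> appell (fun n a => f n a + g n a).
Proof.
move=> hf hg n a /=; rewrite hf hg -big_split; apply: eq_bigr => k _; by rewrite /= mulrDr.
Qed.

Lemma appellMr f k : appell f -> appell (fun n a => f n a * k).
Proof. by move=> hf n a /=; rewrite hf mulr_suml; apply: eq_bigr => i _; ring. Qed.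

Lemma appellMl k f : appell f -> appell (fun n a => k * f n a).
Proof. by move=> hf n a /=; rewrite hf mulr_sumr; apply: eq_bigr => i _; ring. Qed.

Lemma appell_der f : appell f -> appell (fun n a => n%:R * f n.-1 a).
Proof.
move=> hf [|n] a /=.
  by rewrite big_ord_recr big_ord0 /= !mul0r mulr0 addr0.
rewrite hf [in RHS]big_ord_recr /= subnn mul0r mulr0 addr0 mulr_sumr.
apply: eq_bigr => k _; have le : (k <= n)%N := ltn_ord k.
rewrite mulrA -natrM mul_bin_down natrM subSn //=; ring.
Qed.

Lemma appellA c : appell (A c).
Proof. by move=> n a; rewrite A_add; apply: eq_bigr => k _; rewrite expr1n mulr1. Qed.

Lemma appell_Qn d c m b : appell (fun n a => Q d c n m a b).
Proof. by move=> n a; rewrite Q_appn. Qed.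

Lemma appell_Qm d c j b : appell (fun n a => Q d c j n b a).
Proof. by move=> n a; rewrite Q_appm. Qed.

Lemma appell_anti f : appell f -> (forall n a, f n (a + 1) = - f n a) ->
  forall n a, f n a = 0.
Proof.
move=> hf ha; elim/ltn_ind => n IH a.
have := hf n a; rewrite ha big_ord_recl /= subn0 bin0 mul1r big1 ?addr0.
  move=> H; apply: dbl_inj; rewrite addr0 -{1}H addNr //.
move=> i _; rewrite IH ?mulr0 // /bump /= add1n ltn_subrL /=.
exact: (leq_ltn_trans (leq0n i) (ltn_ord i)).
Qed.

Lemma appell_per f : appell f -> (forall n a, f n (a + 1) = f n a) ->
  forall n a, f n a = 0.
Proof.
move=> hf ha; elim/ltn_ind => n IH a.
have := hf n.+1 a; rewrite ha big_ord_recl big_ord_recl /= subn0 bin0 mul1r.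
rewrite big1 ?addr0.
  move=> H.
  have : 'C(n.+1, bump 0 0)%:R * f (n.+1 - bump 0 0)%N a = 0.
    by apply: (@addrI _ (f n.+1 a)); rewrite -H addr0.
  rewrite /bump /= bin1 subSS subn0 => /eqP; rewrite mulf_eq0 => /orP [|/eqP //].
  by rewrite pnatr_eq0.
move=> i _; rewrite IH ?mulr0 // /bump /= !add1n subSS ltn_subrL /=.
exact: (leq_ltn_trans (leq0n i) (ltn_ord i)).
Qed.

Lemma K1 n m a b : Q B Eg n m a b - Q B Eg m n b a
  = 2%:R^-1 * (m%:R * A Eg n a * A Eg m.-1 b - n%:R * A Eg n.-1 a * A Eg m b).
Proof.
pose D := fun n a => Q B Eg n m a b - Q B Eg m n b a
  - 2%:R^-1 * (m%:R * A Eg n a * A Eg m.-1 b - n%:R * A Eg n.-1 a * A Eg m b).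
have hD : appell D.
  exact: (appellB (appellB (appell_Qn B Eg m b) (appell_Qm B Eg m b))
     (appellMl _ (appellB (appellMr _ (appellMl _ (appellA Eg))) (appellMr _ (appell_der (appellA Eg)))))).
have anti : forall n a, D n (a + 1) = - D n a.
  move=> k x; rewrite /D (QB_shift Eg k m x b) (QEg_b B k m x b) (QEg_b B m k b x).
  by rewrite (PB_refl k m x b) !euler_shiftA; field.
have := appell_anti hD anti n a; rewrite /D => /eqP; rewrite subr_eq0 => /eqP //.
Qed.

Lemma K2 n m a z : A B m a * A Eg n z - Q Eg B n m z a
  + 2%:R^-1 * (m%:R * Q Eg Eg m.-1 n a z) = 0.
Proof.
pose D := fun m a => A B m a * A Eg n z - Q Eg B n m z a
  + 2%:R^-1 * (m%:R * Q Eg Eg m.-1 n a z).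
have hD : appell D.
  exact: (appellD (appellB (appellMr _ (appellA B)) (appell_Qm Eg B n z))
    (appellMl _ (appell_der (appell_Qn Eg Eg n z)))).
have per : forall m a, D m (a + 1) = D m a.
  move=> k x; rewrite /D bern_shiftA (QB_b Eg n k z x) (QE_shift Eg k.-1 n x z).
  by rewrite (QEg_b Eg k.-1 n x z) (PE_refl k.-1 n x z) !euler_shiftA; field.
exact: (appell_per hD per m a).
Qed.

Lemma K3 n m a b : n%:R * Q B B n.-1 m a b - m%:R * Q B B m.-1 n b a
  = n%:R * A B n.-1 a * A B m b - m%:R * A B n a * A B m.-1 b.
Proof.
pose D := fun n a => n%:R * Q B B n.-1 m a b - m%:R * Q B B m.-1 n b a
  - (n%:R * A B n.-1 a * A B m b - m%:R * A B n a * A B m.-1 b).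
have hD : appell D.
  exact: (appellB (appellB (appell_der (appell_Qn B B m b)) (appellMl _ (appell_Qm B B m.-1 b)))
     (appellB (appellMr _ (appell_der (appellA B))) (appellMr _ (appellMl _ (appellA B))))).
have per : forall n a, D n (a + 1) = D n a.
  move=> k x; rewrite /D (QB_shift B k.-1 m x b) (QB_b B k.-1 m x b) (QB_b B m.-1 k b x).
  rewrite (PB_refl k.-1 m.-1 x b) !bern_shiftA; ring.
have := appell_per hD per n a; rewrite /D => /eqP; rewrite subr_eq0 => /eqP //.
Qed.

End K.
Section Fin.
Variable F : numFieldType.
Implicit Types (c d : nat -> F) (a b u x y z t : F).
Local Notation B := (bernoulli F).
Local Notation Eg := (@Eg F).
Lemma horner1' t : (1 : {poly F}).[t] = 1.
Proof. by rewrite -polyC1 hornerC. Qed.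
Let hE := (hornerD, hornerN, hornerX, hornerC, horner_exp, hornerM, hornerZ, hornerXn, horner1').

Lemma Qexp d c n m a b : (forall j u, A c j (1 - u) = (-1) ^+ j * A c j u) ->
  Q d c n m a b = (-1) ^+ m * \sum_(k < m.+1) 'C(m, k)%:R * A c (m - k) (1 - a - b) * A d (n + k) a.
Proof.
move=> refl; rewrite /Q.
have -> : Apol c m \Po (b%:P - 'X) = (-1) ^+ m *: \sum_(k < m.+1)
    ('C(m, k)%:R * A c (m - k) (1 - a - b)) *: ('X + a%:P) ^+ k.
  apply: poly_eq_ev => t; rewrite hornerQ hornerZ horner_sum.
  have -> : b - t = 1 - ((1 - a - b) + (t + a)) by ring.
  rewrite refl A_add; congr (_ * _); apply: eq_bigr => k _; rewrite !hE; ring.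
rewrite -scalerAr lfZ; congr (_ * _); rewrite mulr_sumr lf_sum; apply: eq_bigr => k _.
by rewrite -scalerAr lfZ -exprD lf_XaddC.
Qed.

Definition TB c N u s : {poly F} := Apol c N \Po (u%:P + s *: 'X).

Lemma hornerTB c N u s t : (TB c N u s).[t] = A c N (u + s * t).
Proof. by rewrite /TB horner_comp hornerA !hE. Qed.

Lemma coefTB c N u s j : (TB c N u s)`_j = 'C(N, j)%:R * s ^+ j * A c (N - j) u.
Proof. exact: coef_Apol_comp. Qed.

Lemma derivTB c N u s : (TB c N u s)^`() = (N%:R * s) *: TB c N.-1 u s.
Proof.
rewrite /TB deriv_comp deriv_Apol derivD derivC derivZ derivX add0r comp_polyZ.
by apply: poly_eq_ev => t; rewrite !hE; ring.
Qed.

Lemma bernoulliP_A n x : bernoulliP n x = A B n x.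
Proof. by []. Qed.

Lemma id1 (l m n : nat) x y z : (0 < l)%N -> (l <= m)%N -> (l <= n)%N -> x + y + z = 1 ->
   (-1) ^+ m * \sum_(k < m.+1) ('C(m, k) * 'C(n + k, l.-1))%:R
        * bernoulliP (n - l + k + 1) x * eulerP (m - k) z
   + (-1) ^+ (n - l) * \sum_(k < n.+1) ('C(n, k) * 'C(m + k, l.-1))%:R
        * bernoulliP (m - l + k + 1) y * eulerP (n - k) z
   = - (l%:R / 2%:R) * \sum_(k < l.+1) (-1) ^+ k * ('C(m, k) * 'C(n, l - k))%:R
        * eulerP (n - l + k) x * eulerP (m - k) y.
Proof.
case: l => [//|l] _ lm ln xyz.
have HP : (-1) ^+ m *: \sum_(k < m.+1) ('C(m, k)%:R * A Eg (m - k) z) *: TB B (n + k) x 1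
   - (-1) ^+ n *: \sum_(k < n.+1) ('C(n, k)%:R * A Eg (n - k) z) *: TB B (m + k) y (-1)
   = - 2%:R^-1 *: (TB Eg n x 1 * TB Eg m y (-1))^`().
  apply: poly_eq_ev => t.
  transitivity (Q B Eg n m (x + t) (y - t) - Q B Eg m n (y - t) (x + t)).
    rewrite !(Qexp _ _ _ _ _ (@euler_reflA F)) !hE !horner_sum.
    have hz1 : 1 - (x + t) - (y - t) = z by rewrite -xyz; ring.
    have hz2 : 1 - (y - t) - (x + t) = z by rewrite -xyz; ring.
    rewrite hz1 hz2 !mulr_sumr; congr (_ + _); last congr (- _).
      by apply: eq_bigr => k _; rewrite !hE hornerTB mul1r; ring.
    by apply: eq_bigr => k _; rewrite !hE hornerTB mulN1r; ring.
  rewrite K1 derivM !derivTB !hE !hornerTB !mul1r !mulN1r; ring.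
have := congr1 (fun p : {poly F} => p`_l) HP.
rewrite coefB !coefZ !coef_sum.
have E1 : \sum_(k < m.+1) (('C(m, k)%:R * A Eg (m - k) z) *: TB B (n + k) x 1)`_l
  = \sum_(k < m.+1) ('C(m, k) * 'C(n + k, l.+1.-1))%:R * bernoulliP (n - l.+1 + k + 1) x
        * eulerP (m - k) z.
  apply: eq_bigr => k _; rewrite coefZ coefTB expr1n mulr1 eulerP_A bernoulliP_A natrM.
  have -> : (n - l.+1 + k + 1 = n + k - l)%N by lia.
  rewrite /=; ring.
have E2 : \sum_(k < n.+1) (('C(n, k)%:R * A Eg (n - k) z) *: TB B (m + k) y (-1))`_l
  = (-1) ^+ l * \sum_(k < n.+1) ('C(n, k) * 'C(m + k, l.+1.-1))%:R
        * bernoulliP (m - l.+1 + k + 1) y * eulerP (n - k) z.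
  rewrite mulr_sumr; apply: eq_bigr => k _.
  rewrite coefZ coefTB eulerP_A bernoulliP_A natrM.
  have -> : (m - l.+1 + k + 1 = m + k - l)%N by lia.
  rewrite /=; ring.
have E3 : (TB Eg n x 1 * TB Eg m y (-1))^`()`_l = (l.+1)%:R *
   \sum_(k < l.+2) (-1) ^+ k * ('C(m, k) * 'C(n, l.+1 - k))%:R * eulerP (n - l.+1 + k) x
     * eulerP (m - k) y.
  rewrite coef_deriv coefM [RHS]mulr_natl; congr (_ *+ _).
  rewrite (reindex_inj rev_ord_inj) /=; apply: eq_bigr => k _.
  have le : (k <= l.+1)%N := ltn_ord k.
  rewrite !coefTB subKn // expr1n mulr1 !eulerP_A natrM.
  have -> : (n - (l.+1 - k) = n - l.+1 + k)%N by lia.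
  ring.
rewrite E1 E2 E3 => H.
rewrite signB // exprS.
transitivity ((-1) ^+ m * \sum_(k < m.+1) ('C(m, k) * 'C(n + k, l.+1.-1))%:R
    * bernoulliP (n - l.+1 + k + 1) x * eulerP (m - k) z
  - (-1) ^+ n * ((-1) ^+ l * \sum_(k < n.+1) ('C(n, k) * 'C(m + k, l.+1.-1))%:R
        * bernoulliP (m - l.+1 + k + 1) y * eulerP (n - k) z)); first by ring.
rewrite H; ring.
Qed.

Lemma id2 (l m n : nat) x y z : (0 < l)%N -> (l <= m)%N -> (l <= n)%N -> x + y + z = 1 ->
   \sum_(k < l.+1) (-1) ^+ k * ('C(m, k) * 'C(n, l - k))%:R
        * bernoulliP (m - k) x * eulerP (n - l + k) z
   - (-1) ^+ m * \sum_(k < m.+1) ('C(m, k) * 'C(n + k, l))%:R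
        * bernoulliP (m - k) y * eulerP (n - l + k) z
   = (-1) ^+ (n - l + 1) * (m%:R / 2%:R)
        * \sum_((l == m) <= k < n.+1) ('C(n, k) * 'C(m + k - 1, l))%:R
        * eulerP (n - k) y * eulerP (m + k - l - 1) x.
Proof.
move=> l0 lm ln xyz.
have m0 : (0 < m)%N by apply: (leq_trans l0 lm).
have HP : TB B m x (-1) * TB Eg n z 1
   - (-1) ^+ m *: \sum_(k < m.+1) ('C(m, k)%:R * A B (m - k) y) *: TB Eg (n + k) z 1
   + (2%:R^-1 * m%:R * (-1) ^+ n) *: \sum_(k < n.+1) ('C(n, k)%:R * A Eg (n - k) y)
        *: TB Eg (m.-1 + k) x (-1) = 0.
  apply: poly_eq_ev => t; rewrite horner0.
  rewrite -(K2 n m (x - t) (z + t)).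
  rewrite (Qexp _ _ _ _ _ (@bern_reflA F)) (Qexp _ _ _ _ _ (@euler_reflA F)).
  have hy1 : 1 - (z + t) - (x - t) = y by rewrite -xyz; ring.
  have hy2 : 1 - (x - t) - (z + t) = y by rewrite -xyz; ring.
  rewrite hy1 hy2 !hE !horner_sum !hornerTB mul1r mulN1r.
  congr (_ + - _ + _).
    by rewrite !mulr_sumr; apply: eq_bigr => k _; rewrite !hE hornerTB mul1r; ring.
  by rewrite !mulr_sumr; apply: eq_bigr => k _; rewrite !hE hornerTB mulN1r; ring.
have := congr1 (fun p : {poly F} => p`_l) HP.
rewrite coef0 coefD coefB !coefZ !coef_sum coefM.
have E1 : \sum_(j < l.+1) (TB B m x (-1))`_j * (TB Eg n z 1)`_(l - j)
  = \sum_(k < l.+1) (-1) ^+ k * ('C(m, k) * 'C(n, l - k))%:R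
        * bernoulliP (m - k) x * eulerP (n - l + k) z.
  apply: eq_bigr => k _; have le : (k <= l)%N := ltn_ord k.
  rewrite !coefTB expr1n mulr1 eulerP_A bernoulliP_A natrM.
  have -> : (n - (l - k) = n - l + k)%N by lia.
  ring.
have E2 : \sum_(k < m.+1) (('C(m, k)%:R * A B (m - k) y) *: TB Eg (n + k) z 1)`_l
  = \sum_(k < m.+1) ('C(m, k) * 'C(n + k, l))%:R
        * bernoulliP (m - k) y * eulerP (n - l + k) z.
  apply: eq_bigr => k _; rewrite coefZ coefTB expr1n mulr1 eulerP_A bernoulliP_A natrM.
  have -> : (n + k - l = n - l + k)%N by lia.
  ring.
have Hlow : \sum_((l == m) <= k < n.+1) ('C(n, k) * 'C(m + k - 1, l))%:R
        * eulerP (n - k) y * eulerP (m + k - l - 1) x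
   = \sum_(k < n.+1) ('C(n, k) * 'C(m + k - 1, l))%:R
        * eulerP (n - k) y * eulerP (m + k - l - 1) x.
  case: eqP => [lmE|_] /=; last by rewrite big_mkord.
  rewrite big_add1 /= big_mkord [RHS]big_ord_recl /=.
  have -> : 'C(m + 0 - 1, l) = 0%N by rewrite addn0 lmE bin_small //; lia.
  rewrite muln0 mul0r mul0r add0r; apply: eq_bigr => i _.
  by rewrite /bump /= add1n.
have E3 : \sum_(k < n.+1) (('C(n, k)%:R * A Eg (n - k) y) *: TB Eg (m.-1 + k) x (-1))`_l
  = (-1) ^+ l * \sum_((l == m) <= k < n.+1) ('C(n, k) * 'C(m + k - 1, l))%:R
        * eulerP (n - k) y * eulerP (m + k - l - 1) x.
  rewrite Hlow mulr_sumr; apply: eq_bigr => k _.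
  rewrite coefZ coefTB !eulerP_A natrM.
  have -> : (m.-1 + k = m + k - 1)%N by lia.
  have -> : (m + k - 1 - l = m + k - l - 1)%N by lia.
  ring.
rewrite E1 E2 E3 => H.
rewrite addn1 exprSr signB //.
move/eqP: H; rewrite addr_eq0 => /eqP ->; ring.
Qed.

Lemma id3 (l m n : nat) x y z : (0 < l)%N -> (l <= m)%N -> (l <= n)%N -> x + y + z = 1 ->
   (-1) ^+ m / m%:R * \sum_(k < m.+1) ('C(m, k) * 'C(n + k - 1, l.-1))%:R
        * bernoulliP (n - l + k) x * bernoulliP (m - k) z
   + (-1) ^+ l * ((-1) ^+ n / n%:R) * \sum_(k < n.+1) ('C(n, k) * 'C(m + k - 1, l.-1))%:R
        * bernoulliP (m - l + k) y * bernoulliP (n - k) z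
   = l%:R / (m * n)%:R * \sum_(k < l.+1) (-1) ^+ k * ('C(m, k) * 'C(n, l - k))%:R
        * bernoulliP (n - l + k) x * bernoulliP (m - k) y.
Proof.
case: l => [//|l] _ lm ln xyz.
have HP : (n%:R * (-1) ^+ m) *: \sum_(k < m.+1) ('C(m, k)%:R * A B (m - k) z) *: TB B (n.-1 + k) x 1
   - (m%:R * (-1) ^+ n) *: \sum_(k < n.+1) ('C(n, k)%:R * A B (n - k) z) *: TB B (m.-1 + k) y (-1)
   = (TB B n x 1 * TB B m y (-1))^`().
  apply: poly_eq_ev => t.
  transitivity (n%:R * Q B B n.-1 m (x + t) (y - t) - m%:R * Q B B m.-1 n (y - t) (x + t)).
    rewrite !(Qexp _ _ _ _ _ (@bern_reflA F)) !hE !horner_sum.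
    have hz1 : 1 - (x + t) - (y - t) = z by rewrite -xyz; ring.
    have hz2 : 1 - (y - t) - (x + t) = z by rewrite -xyz; ring.
    rewrite hz1 hz2 !mulr_sumr; congr (_ + _); last congr (- _).
      by apply: eq_bigr => k _; rewrite !hE hornerTB mul1r; ring.
    by apply: eq_bigr => k _; rewrite !hE hornerTB mulN1r; ring.
  rewrite K3 derivM !derivTB !hE !hornerTB !mul1r !mulN1r; ring.
have := congr1 (fun p : {poly F} => p`_l) HP.
rewrite coefB !coefZ !coef_sum.
have E1 : \sum_(k < m.+1) (('C(m, k)%:R * A B (m - k) z) *: TB B (n.-1 + k) x 1)`_l
  = \sum_(k < m.+1) ('C(m, k) * 'C(n + k - 1, l.+1.-1))%:R * bernoulliP (n - l.+1 + k) x
        * bernoulliP (m - k) z.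
  apply: eq_bigr => k _; rewrite coefZ coefTB expr1n mulr1 !bernoulliP_A natrM.
  have -> : (n.-1 + k = n + k - 1)%N by lia.
  have -> : (n + k - 1 - l = n - l.+1 + k)%N by lia.
  rewrite /=; ring.
have E2 : \sum_(k < n.+1) (('C(n, k)%:R * A B (n - k) z) *: TB B (m.-1 + k) y (-1))`_l
  = (-1) ^+ l * \sum_(k < n.+1) ('C(n, k) * 'C(m + k - 1, l.+1.-1))%:R
        * bernoulliP (m - l.+1 + k) y * bernoulliP (n - k) z.
  rewrite mulr_sumr; apply: eq_bigr => k _.
  rewrite coefZ coefTB !bernoulliP_A natrM.
  have -> : (m.-1 + k = m + k - 1)%N by lia.
  have -> : (m + k - 1 - l = m - l.+1 + k)%N by lia.
  rewrite /=; ring.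
have E3 : (TB B n x 1 * TB B m y (-1))^`()`_l = (l.+1)%:R *
   \sum_(k < l.+2) (-1) ^+ k * ('C(m, k) * 'C(n, l.+1 - k))%:R * bernoulliP (n - l.+1 + k) x
     * bernoulliP (m - k) y.
  rewrite coef_deriv coefM [RHS]mulr_natl; congr (_ *+ _).
  rewrite (reindex_inj rev_ord_inj) /=; apply: eq_bigr => k _.
  have le : (k <= l.+1)%N := ltn_ord k.
  rewrite !coefTB subKn // expr1n mulr1 !bernoulliP_A natrM.
  have -> : (n - (l.+1 - k) = n - l.+1 + k)%N by lia.
  ring.
rewrite E1 E2 E3 => H.
have mn0 : (m%:R : F) != 0 by rewrite pnatr_eq0 -lt0n (leq_trans _ lm).
have nn0 : (n%:R : F) != 0 by rewrite pnatr_eq0 -lt0n (leq_trans _ ln).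
rewrite [RHS]mulrAC -H exprS natrM.
field.
by rewrite mn0 nn0.
Qed.

End Fin.

Theorem theorem1p2 (R : realType) (l m n : nat) (x y z : R[i]) :
  (0 < l)%N -> (0 < m)%N -> (0 < n)%N -> (l <= minn m n)%N -> x + y + z = 1 ->
  [/\
   (-1) ^+ m * \sum_(k < m.+1) ('C(m, k) * 'C(n + k, l.-1))%:R
        * bernoulliP (n - l + k + 1) x * eulerP (m - k) z
   + (-1) ^+ (n - l) * \sum_(k < n.+1) ('C(n, k) * 'C(m + k, l.-1))%:R
        * bernoulliP (m - l + k + 1) y * eulerP (n - k) z
   = - (l%:R / 2%:R) * \sum_(k < l.+1) (-1) ^+ k * ('C(m, k) * 'C(n, l - k))%:R
        * eulerP (n - l + k) x * eulerP (m - k) y,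
   \sum_(k < l.+1) (-1) ^+ k * ('C(m, k) * 'C(n, l - k))%:R
        * bernoulliP (m - k) x * eulerP (n - l + k) z
   - (-1) ^+ m * \sum_(k < m.+1) ('C(m, k) * 'C(n + k, l))%:R
        * bernoulliP (m - k) y * eulerP (n - l + k) z
   = (-1) ^+ (n - l + 1) * (m%:R / 2%:R)
        * \sum_((l == m) <= k < n.+1) ('C(n, k) * 'C(m + k - 1, l))%:R
        * eulerP (n - k) y * eulerP (m + k - l - 1) x
 & (-1) ^+ m / m%:R * \sum_(k < m.+1) ('C(m, k) * 'C(n + k - 1, l.-1))%:R
        * bernoulliP (n - l + k) x * bernoulliP (m - k) z
   + (-1) ^+ l * ((-1) ^+ n / n%:R) * \sum_(k < n.+1) ('C(n, k) * 'C(m + k - 1, l.-1))%:R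
        * bernoulliP (m - l + k) y * bernoulliP (n - k) z
   = l%:R / (m * n)%:R * \sum_(k < l.+1) (-1) ^+ k * ('C(m, k) * 'C(n, l - k))%:R
        * bernoulliP (n - l + k) x * bernoulliP (m - k) y ].
Proof.
move=> l0 _ _; rewrite leq_min => /andP [lm ln] xyz.
split.
- exact: (id1 l0 lm ln xyz).
- exact: (id2 l0 lm ln xyz).
- exact: (id3 l0 lm ln xyz).
Qed.
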